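(* Let $\alpha=3/4$. Every point $(x,y)\in[0,1]^2$ with $x+y=4/3$ satisfies $G_{3/4}(x,y)=(y,x)$, so each such point other than the fixed point $(2/3,2/3)$ is periodic with period $2$. Moreover, every point of $[0,1]^2$ other than $(0,0)$ is either periodic (with period $1$ or $2$), or eventually periodic, or its orbit is attracted to the line $x+y=4/3$, i.e. the distance from $G_{3/4}^n(x,y)$ to the line $\{x+y=4/3\}$ tends to $0$ as $n\to\infty$.
   Context: Let $\tau:[0,1]\to[0,1]$ be the symmetric tent map, $\tau(x)=2x$ for $0\le x<1/2$ and $\tau(x)=2-2x$ for $1/2\le x\le 1$. For $0<\alpha<1$ define $G_\alpha:[0,1]^2\to[0,1]^2$ by $G_\alpha(x,y)=(y,\tau(\alpha y+(1-\alpha)x))$. *)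

(* Defs.v *)
From Stdlib Require Import Reals Lra.
Open Scope R_scope.

Definition tau (x : R) : R := if Rlt_dec x (1/2) then 2 * x else 2 - 2 * x.

Definition G (alpha : R) (p : R * R) : R * R :=
  (snd p, tau (alpha * snd p + (1 - alpha) * fst p)).

Definition Giter (alpha : R) (n : nat) (p : R * R) : R * R :=
  Nat.iter n (G alpha) p.

Definition in_square (p : R * R) : Prop :=
  0 <= fst p <= 1 /\ 0 <= snd p <= 1.

Definition dist_line (p : R * R) : R :=
  Rabs (fst p + snd p - 4/3) / sqrt 2.

(* Main.v *)
Require Import Defs.
From Stdlib Require Import Reals Lra Lia.
Open Scope R_scope.

Lemma iter_S n p : Giter (3/4) (S n) p = Giter (3/4) n (G (3/4) p).
Proof. unfold Giter. induction n; simpl; auto. simpl in IHn. rewrite <- IHn. reflexivity. Qed.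

Definition good (p : R*R) := -(2/25) <= fst p + snd p - 4/3 <= 2/25.
Definition reach (k : nat) p := exists n, (n <= k)%nat /\ good (Giter (3/4) n p).

Lemma reach_now k p : good p -> reach k p.
Proof. intros H; exists 0%nat; split; [lia| exact H]. Qed.
Lemma reach_step k p : reach k (G (3/4) p) -> reach (S k) p.
Proof. intros [n [Hn H]]. exists (S n). split; [lia|]. rewrite iter_S; exact H. Qed.

Lemma tau_cases z : (z < 1/2 /\ tau z = 2*z) \/ (1/2 <= z /\ tau z = 2 - 2*z).
Proof. unfold tau; destruct (Rlt_dec z (1/2)); [left|right]; split; auto; lra. Qed.

Lemma G_eq x y : G (3/4) (x,y) = (y, tau (3/4*y + (1-3/4)*x)).
Proof. reflexivity. Qed.

Ltac explore :=
  lazymatch goal with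
  | |- reach ?k (?x, ?y) =>
    destruct (Rle_lt_dec (-(2/25)) (x+y-4/3)); destruct (Rle_lt_dec (x+y-4/3) (2/25));
    [ apply reach_now; unfold good; cbn [fst snd]; lra
    | try (exfalso; lra); explore_step k x y
    | try (exfalso; lra); explore_step k x y
    | try (exfalso; lra); explore_step k x y ]
  end
with explore_step k x y :=
  lazymatch k with
  | O => exfalso; lra
  | S _ => apply reach_step; rewrite G_eq;
      let w := fresh "w" in let Hw := fresh "Hw" in
      destruct (tau_cases (3/4*y + (1-3/4)*x)) as [[? Ht]|[? Ht]]; rewrite Ht; clear Ht;
      match goal with |- reach _ (_, ?t) => remember t as w eqn:Hw end; explore
  end.

Lemma reachR x y : 0 <= x <= 1 -> 0 <= y <= 1 -> 1 <= x + 2*y -> reach 9 (x,y).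
Proof. intros. explore. Qed.

Lemma iter_add n m p : Giter (3/4) (n + m) p = Giter (3/4) n (Giter (3/4) m p).
Proof. induction n; simpl; auto. unfold Giter in *. simpl. rewrite IHn. reflexivity. Qed.

Lemma sq_G p : in_square p -> in_square (G (3/4) p).
Proof.
  destruct p as [x y]; unfold in_square; cbn [fst snd]; intros [H1 H2].
  rewrite G_eq; cbn [fst snd].
  destruct (tau_cases (3/4*y + (1-3/4)*x)) as [[? Ht]|[? Ht]]; rewrite Ht; lra.
Qed.

Lemma sq_iter n p : in_square p -> in_square (Giter (3/4) n p).
Proof. intros H; induction n; simpl; auto. apply sq_G; exact IHn. Qed.

Definition L (p : R*R) := fst p + 2 * snd p.

Lemma enterR m : forall p, in_square p -> 1 <= L p * 2 ^ m -> exists n, 1 <= L (Giter (3/4) n p).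
Proof.
  induction m; intros [x y] Hs HL.
  - exists 0%nat. simpl in *. lra.
  - destruct (Rle_lt_dec 1 (L (x,y))) as [H1|H1]. { exists 0%nat; exact H1. }
    unfold in_square, L in *; cbn [fst snd] in *.
    destruct (tau_cases (3/4*y + (1-3/4)*x)) as [[Hz Ht]|[Hz Ht]]; [|exfalso; lra].
    set (y1 := 2 * (3/4*y + (1-3/4)*x)).
    destruct (Rle_lt_dec 1 (y + 2 * y1)) as [H2|H2].
    { exists 1%nat. change (Giter (3/4) 1 (x,y)) with (G (3/4) (x,y)).
      rewrite G_eq, Ht. unfold L; cbn [fst snd]. exact H2. }
    destruct (tau_cases (3/4*y1 + (1-3/4)*y)) as [[Hz2 Ht2]|[Hz2 Ht2]];
      [|exfalso; unfold y1 in *; lra].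
    assert (Hs2 : in_square (Giter (3/4) 2 (x,y))) by (apply sq_iter; unfold in_square; cbn; lra).
    assert (HE : Giter (3/4) 2 (x,y) = (y1, 2 * (3/4*y1 + (1-3/4)*y))).
    { change (Giter (3/4) 2 (x,y)) with (G (3/4) (G (3/4) (x,y))).
      rewrite G_eq, Ht. fold y1. rewrite G_eq, Ht2. reflexivity. }
    destruct (IHm _ Hs2) as [n Hn].
    { rewrite HE. unfold L; cbn [fst snd]. simpl in HL. unfold y1 in *.
      assert (0 < 2 ^ m) by (apply pow_lt; lra). nra. }
    exists (n + 2)%nat. rewrite iter_add. exact Hn.
Qed.

Definition V (p : R*R) : R :=
  if Rle_lt_dec 0 (fst p + snd p - 4/3) then fst p + snd p - 4/3
  else if Rlt_le_dec (2*(1 - fst p) + 3*(fst p + snd p - 4/3)) 0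
       then 125/81 * (-(fst p + snd p - 4/3))
       else 5/9 * (-(fst p + snd p - 4/3)).

Lemma V_ge p : 5/9 * Rabs (fst p + snd p - 4/3) <= V p.
Proof.
  unfold V; destruct (Rle_lt_dec 0 (fst p + snd p - 4/3));
  [rewrite Rabs_right by lra | rewrite Rabs_left by lra];
  repeat match goal with |- context [Rlt_le_dec ?a ?b] => destruct (Rlt_le_dec a b) end; lra.
Qed.

Lemma V_good p : good p -> V p < 1/8.
Proof.
  unfold good, V; intros H.
  destruct (Rle_lt_dec 0 (fst p + snd p - 4/3));
  repeat match goal with |- context [Rlt_le_dec ?a ?b] => destruct (Rlt_le_dec a b) end; lra.
Qed.

Lemma V_contr p : in_square p -> V p < 1/8 -> V (G (3/4) p) <= 9/10 * V p.
Proof.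
  destruct p as [x y]; unfold in_square; cbn [fst snd]; intros Hs.
  rewrite G_eq. unfold V; cbn [fst snd].
  destruct (tau_cases (3/4*y + (1-3/4)*x)) as [[? Ht]|[? Ht]]; rewrite Ht;
  repeat match goal with |- context [Rle_lt_dec ?a ?b] => destruct (Rle_lt_dec a b)
    | |- context [Rlt_le_dec ?a ?b] => destruct (Rlt_le_dec a b) end; lra.
Qed.

Lemma div_sqrt2 a : 0 <= a -> 0 <= a / sqrt 2 <= a.
Proof.
  intros Ha.
  assert (H1 : 1 <= sqrt 2). { rewrite <- sqrt_1. apply sqrt_le_1_alt. lra. }
  assert (H2 : 0 < / sqrt 2) by (apply Rinv_0_lt_compat; lra).
  assert (H3 : / sqrt 2 <= 1). { rewrite <- Rinv_1. apply Rinv_le_contravar; lra. }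
  unfold Rdiv. split; nra.
Qed.

Lemma line_G x y : in_square (x,y) -> x + y = 4/3 -> G (3/4) (x,y) = (y,x).
Proof.
  unfold in_square; cbn [fst snd]; intros Hs Hxy.
  rewrite G_eq. destruct (tau_cases (3/4*y + (1-3/4)*x)) as [[? Ht]|[? Ht]]; rewrite Ht.
  - exfalso; lra.
  - f_equal; lra.
Qed.

Theorem theorem5 :
  (forall x y : R, in_square (x, y) -> x + y = 4/3 ->
     G (3/4) (x, y) = (y, x) /\
     ((x, y) <> (2/3, 2/3) ->
        G (3/4) (x, y) <> (x, y) /\ Giter (3/4) 2 (x, y) = (x, y)))
  /\
  (forall p : R * R, in_square p -> p <> (0, 0) ->
     (Giter (3/4) 1 p = p \/ Giter (3/4) 2 p = p)
     \/ (exists m k : nat, (1 <= k)%nat /\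
           Giter (3/4) (m + k) p = Giter (3/4) m p)
     \/ Un_cv (fun n => dist_line (Giter (3/4) n p)) 0).
Proof.
  split.
  - intros x y Hs Hxy. split; [apply line_G; auto|].
    intros Hne. split.
    + rewrite line_G by auto. intros Heq. injection Heq as E1 E2.
      apply Hne. f_equal; lra.
    + change (Giter (3/4) 2 (x,y)) with (G (3/4) (G (3/4) (x,y))).
      rewrite line_G by auto. apply line_G; [|lra].
      unfold in_square in *; cbn [fst snd] in *; lra.
  - intros p Hs Hne. right; right.
    assert (HL : 0 < L p).
    { destruct p as [x y]; unfold in_square, L in *; cbn [fst snd] in *.
      destruct (Rle_lt_dec (x + 2*y) 0); [|lra].
      exfalso; apply Hne; f_equal; lra. }
    destruct (pow_lt_1_zero (1/2) ltac:(rewrite Rabs_right; lra) (L p) HL) as [m Hm].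
    assert (Hm' := Hm m (le_n m)).
    assert (Hp : (1/2)^m * 2^m = 1) by (rewrite <- Rpow_mult_distr; replace (1/2*2) with 1 by lra; apply pow1).
    rewrite Rabs_right in Hm' by (apply Rle_ge, pow_le; lra).
    destruct (enterR m p Hs) as [n1 Hn1].
    { assert (0 < 2^m) by (apply pow_lt; lra). nra. }
    set (p1 := Giter (3/4) n1 p) in *.
    assert (Hs1 : in_square p1) by (apply sq_iter; auto).
    destruct p1 as [x1 y1] eqn:Ep1.
    destruct (reachR x1 y1) as [n2 [_ Hn2]];
      try (unfold in_square, L in *; cbn [fst snd] in *; lra).
    set (q := Giter (3/4) (n2 + n1) p).
    assert (Hq : V q < 1/8).
    { apply V_good. unfold q. rewrite iter_add. fold p1. rewrite Ep1. exact Hn2. }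
    assert (Hqs : in_square q) by (apply sq_iter; auto).
    assert (Hdec : forall n, V (Giter (3/4) n q) < 1/8 /\
                           V (Giter (3/4) n q) <= (9/10)^n * V q).
    { induction n; simpl.
      - split; [exact Hq| lra].
      - destruct IHn as [I1 I2].
        assert (Hc := V_contr (Giter (3/4) n q) (sq_iter n q Hqs) I1).
        assert (Hv := V_ge (Giter (3/4) n q)).
        assert (0 <= Rabs (fst (Giter (3/4) n q) + snd (Giter (3/4) n q) - 4/3)) by apply Rabs_pos.
        unfold Giter in *; simpl in *. split; nra. }
    intros eps Heps.
    destruct (pow_lt_1_zero (9/10) ltac:(rewrite Rabs_right; lra) eps Heps) as [M HM].
    exists (M + (n2 + n1))%nat. intros n Hn.
    replace n with ((n - (n2 + n1)) + (n2 + n1))%nat by lia.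
    rewrite iter_add. fold q.
    set (k := (n - (n2 + n1))%nat).
    assert (Hk : (k >= M)%nat) by (unfold k; lia).
    specialize (HM k Hk). destruct (Hdec k) as [D1 D2].
    assert (Hv := V_ge (Giter (3/4) k q)).
    assert (Hqk : 0 <= (9/10)^k) by (apply pow_le; lra).
    rewrite Rabs_right in HM by lra.
    assert (Hvq : 0 <= V q) by (assert (Hx := V_ge q); assert (Hy := Rabs_pos (fst q + snd q - 4/3)); lra).
    unfold R_dist, dist_line. rewrite Rminus_0_r.
    set (a := Rabs (fst (Giter (3/4) k q) + snd (Giter (3/4) k q) - 4/3)) in *.
    assert (Ha : 0 <= a) by apply Rabs_pos.
    destruct (div_sqrt2 a Ha) as [S1 S2].
    rewrite Rabs_right by lra.
    nra.
Qed.
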